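(* There is an absolute constant $c$ such that the following holds. Let $P$ be a finite set of points in $\mathbb{R}^2$, each $p\in P$ having a transmission radius $r(p)>0$. Let $C$ be a clique in the intersection graph $\mathcal{G}^{\times}(\mathcal{D}_P)$ and let $P(C)\subseteq P$ be the set of points whose transmission disks belong to $C$. Then $P(C)$ can be covered by at most $c$ transitive paths in $\mathcal{G}_{\mathrm{tr}}(P)$, i.e. $P(C)$ is the union of at most $c$ sets each of whose points can be ordered as a transitive path.
   Context: The transmission graph $\mathcal{G}_{\mathrm{tr}}(P)$ is the directed graph on $P$ with an arc $(p,q)$ iff $|pq|\leq r(p)$ (Euclidean distance). The transmission disk of $p$ is $D_p$, the closed disk of radius $r(p)$ centered at $p$, and $\mathcal{D}_P=\{D_p:p\in P\}$. $\mathcal{G}^{\times}(\mathcal{D}_P)$ is the undirected graph with node set $\mathcal{D}_P$ and an edge between $D_p,D_q$ iff $D_p\cap D_q\neq\emptyset$. A transitive path is a sequence $q_1,\ldots,q_k$ of distinct points of $P$ such that $(q_i,q_j)$ is an arc of $\mathcal{G}_{\mathrm{tr}}(P)$ for all $1\le i<j\le k$. *)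

(* Defs.v *)
From Stdlib Require Import Reals List.
Import ListNotations.
Open Scope R_scope.

Definition point : Type := (R * R)%type.

Definition dist (p q : point) : R :=
  sqrt ((fst p - fst q) ^ 2 + (snd p - snd q) ^ 2).

Definition in_disk (r : point -> R) (p z : point) : Prop := dist z p <= r p.

Definition tr_arc (r : point -> R) (p q : point) : Prop := dist p q <= r p.

Definition disks_intersect (r : point -> R) (p q : point) : Prop :=
  exists z : point, in_disk r p z /\ in_disk r q z.

(* C (given by the centers P(C) of its disks) is a clique of G^x(D_P). *)
Definition is_clique (P : list point) (r : point -> R) (C : list point) : Prop :=
  incl C P /\
  forall p q, In p C -> In q C -> p <> q -> disks_intersect r p q.

Definition transitive_path (P : list point) (r : point -> R) (s : list point) : Prop :=
  NoDup s /\ incl s P /\ ForallOrdPairs (tr_arc r) s.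

(* Main.v *)
From Pilot Require Import Defs.
From Stdlib Require Import Reals List.
From Stdlib Require Import Lra Psatz Lia Permutation.
From Stdlib Require Rgeom.
Import Pilot.Defs.
Import ListNotations.
Open Scope R_scope.

Lemma key a b c d : 0<=b<=a -> 0<=d<=c -> c^2+d^2 <= a^2+b^2 -> (a-c)^2+(b-d)^2 <= a^2+b^2.
Proof. intros [Hb Ha] [Hd Hc] H.
  assert (E : (a-c)^2+(b-d)^2 = (a^2+b^2) + (c^2+d^2) - 2*(a*c+b*d)) by ring.
  rewrite E.
  remember (a*c+b*d) as X. remember (a^2+b^2) as U. remember (c^2+d^2) as V.
  assert (HX : 0 <= X) by (subst; nra).
  assert (HV : 0 <= V) by (subst; nra).
  assert (H1 : U*V <= 2*X^2).
  { subst. assert (0 <= (a^2-b^2)*(c^2-d^2)) by (apply Rmult_le_pos; nra).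
    assert (0 <= a*b*c*d) by (repeat apply Rmult_le_pos; lra). nra. }
  assert (H2 : V*V <= U*V). { apply Rmult_le_compat_r; lra. }
  assert (H3 : V <= 2*X). { destruct (Rle_dec V (2*X)) as [h|h]; auto. exfalso. assert (2*X < V) by lra. assert ((2*X)*(2*X) < V*V) by (apply Rmult_le_0_lt_compat; lra). nra. }
  lra.
Qed.

Definition sq (a b : point) : R := (fst a - fst b)^2 + (snd a - snd b)^2.

Lemma sq_nonneg a b : 0 <= sq a b. Proof. unfold sq. pose proof (pow2_ge_0 (fst a - fst b)). pose proof (pow2_ge_0 (snd a - snd b)). lra. Qed.
Lemma dist_sq a b : dist a b = sqrt (sq a b). Proof. reflexivity. Qed.
Lemma dist_nonneg a b : 0 <= dist a b. Proof. apply sqrt_pos. Qed.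

Lemma dist_le_of_sq a b R0 : 0 <= R0 -> sq a b <= R0^2 -> dist a b <= R0.
Proof. intros. rewrite dist_sq, <- (sqrt_pow2 R0) by auto. apply sqrt_le_1_alt; auto. Qed.

Lemma sq_le_of_dist a b R0 : dist a b <= R0 -> sq a b <= R0^2.
Proof. intros H. pose proof (dist_nonneg a b). pose proof (sqrt_sqrt (sq a b) (sq_nonneg a b)).
 rewrite <- dist_sq in H1. nra. Qed.

Lemma dist_euc_eq a b : dist a b = Rgeom.dist_euc (fst a) (snd a) (fst b) (snd b).
Proof. unfold dist, Rgeom.dist_euc, Rsqr. f_equal. ring. Qed.

Lemma dist_tri a b c : dist a c <= dist a b + dist b c.
Proof. rewrite !dist_euc_eq. apply Rgeom.triangle. Qed.

Lemma dist_sym a b : dist a b = dist b a.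
Proof. unfold dist. f_equal. ring. Qed.

Lemma dist_refl a : dist a a = 0.
Proof. unfold dist. replace ((fst a - fst a) ^ 2 + (snd a - snd a) ^ 2) with 0 by ring. apply sqrt_0. Qed.

Lemma coord_le a b : Rabs (fst a - fst b) <= dist a b /\ Rabs (snd a - snd b) <= dist a b.
Proof.
  pose proof (pow2_ge_0 (fst a - fst b)). pose proof (pow2_ge_0 (snd a - snd b)).
  split; rewrite dist_sq, <- (sqrt_pow2 (Rabs _)) by apply Rabs_pos; rewrite pow2_abs;
  apply sqrt_le_1_alt; unfold sq; lra.
Qed.

Definition octant (x y : R) : nat :=
  ((if Rle_dec 0 x then 0 else 1) + 2 * (if Rle_dec 0 y then 0 else 1)
   + 4 * (if Rle_dec (Rabs y) (Rabs x) then 0 else 1))%nat.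

Lemma octant_lt x y : (octant x y < 8)%nat.
Proof. unfold octant. repeat destruct Rle_dec; lia. Qed.

Lemma octant_eq x1 y1 x2 y2 : octant x1 y1 = octant x2 y2 ->
  (0<=x1 <-> 0<=x2) /\ (0<=y1<->0<=y2) /\ (Rabs y1 <= Rabs x1 <-> Rabs y2 <= Rabs x2).
Proof.
  unfold octant. repeat destruct Rle_dec; intro; try lia;
  (split; [|split]); split; intro; first [assumption | contradiction].
Qed.

Lemma sq_abs_same x1 x2 : (0 <= x1 <-> 0 <= x2) -> (x1 - x2)^2 = (Rabs x1 - Rabs x2)^2.
Proof.
  intros [H1 H2]. unfold Rabs. destruct (Rcase_abs x1), (Rcase_abs x2).
  - ring.
  - exfalso. specialize (H2 ltac:(lra)). lra.
  - exfalso. specialize (H1 ltac:(lra)). lra.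
  - ring.
Qed.

Lemma oct_key u1 u2 v1 v2 : octant u1 u2 = octant v1 v2 -> v1^2+v2^2 <= u1^2+u2^2 ->
  (u1-v1)^2+(u2-v2)^2 <= u1^2+u2^2.
Proof.
  intros Ho Hl. destruct (octant_eq _ _ _ _ Ho) as [Hx [Hy Ha]].
  rewrite (sq_abs_same _ _ Hx), (sq_abs_same _ _ Hy).
  rewrite <- (pow2_abs u1), <- (pow2_abs u2).
  rewrite <- (pow2_abs v1), <- (pow2_abs v2) in Hl. rewrite <- (pow2_abs u1), <- (pow2_abs u2) in Hl.
  pose proof (Rabs_pos u1). pose proof (Rabs_pos u2).
  pose proof (Rabs_pos v1). pose proof (Rabs_pos v2).
  destruct (Rle_dec (Rabs u2) (Rabs u1)) as [h|h].
  - apply key; [split; lra| split; [lra| apply Ha; auto] | lra].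
  - assert (~ Rabs v2 <= Rabs v1) by (intro; apply h; apply Ha; auto).
    assert (Hk := key (Rabs u2) (Rabs u1) (Rabs v2) (Rabs v1)).
    assert (Hk' : (Rabs u2 - Rabs v2) ^ 2 + (Rabs u1 - Rabs v1) ^ 2 <= Rabs u2 ^ 2 + Rabs u1 ^ 2)
      by (apply Hk; [split; lra | split; lra | lra]).
    lra.
Qed.

Section Sort.
Variable f : point -> R.
Fixpoint ins (x : point) (l : list point) : list point :=
  match l with
  | [] => [x]
  | y :: t => if Rle_dec (f x) (f y) then y :: ins x t else x :: y :: t
  end.
Fixpoint isort (l : list point) : list point :=
  match l with [] => [] | x :: t => ins x (isort t) end.

Lemma ins_perm x l : Permutation (x :: l) (ins x l).
Proof.
  induction l as [|a l IH]; simpl; auto.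
  destruct Rle_dec; auto.
  eapply perm_trans; [apply perm_swap|]. constructor; auto.
Qed.

Lemma isort_perm l : Permutation l (isort l).
Proof.
  induction l as [|a l IH]; simpl; auto.
  eapply perm_trans; [apply perm_skip, IH | apply ins_perm].
Qed.

Definition Dk := fun a b => f b <= f a.

Lemma ins_sorted x l : ForallOrdPairs Dk l -> ForallOrdPairs Dk (ins x l).
Proof.
  induction l as [|a l IH]; simpl; intros H.
  - constructor; constructor.
  - inversion H; subst. destruct Rle_dec as [h|h].
    + constructor; auto. apply Forall_forall. intros y Hy.
      apply (Permutation_in _ (Permutation_sym (ins_perm x l))) in Hy.
      destruct Hy as [<-|Hy]; unfold Dk; auto.
      rewrite Forall_forall in H2. apply H2; auto.
    + constructor; [|constructor; auto]. constructor; unfold Dk; [lra|].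
      rewrite Forall_forall in *. intros y Hy. specialize (H2 y Hy). unfold Dk in *. lra.
Qed.

Lemma isort_sorted l : ForallOrdPairs Dk (isort l).
Proof. induction l; simpl; [constructor | apply ins_sorted; auto]. Qed.
End Sort.

Lemma FOP_mono (R1 R2 : point -> point -> Prop) l :
  ForallOrdPairs R1 l -> (forall a b, In a l -> In b l -> R1 a b -> R2 a b) ->
  ForallOrdPairs R2 l.
Proof.
  induction 1 as [|a l Hf Hl IH]; intros H; constructor.
  - rewrite Forall_forall in *. intros y Hy. apply H; simpl; auto.
  - apply IH. intros; apply H; simpl; auto.
Qed.

Definition gc (i : nat) : R :=
  match i with 0 => -2 | 1 => -1 | 2 => 0 | 3 => 1 | _ => 2 end.
Definition gpt (o : point) (rho : R) (i j : nat) : point :=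
  (fst o + gc i * rho, snd o + gc j * rho).

Lemma sqb s e : -e <= s <= e -> s^2 <= e^2.
Proof. intros. nra. Qed.

Lemma grid1 rho t : 0 < rho -> Rabs t <= 2*rho ->
  exists i, (i < 5)%nat /\ (t - gc i * rho)^2 <= rho^2/4.
Proof.
  intros Hr Ht. replace (rho^2/4) with ((rho/2)^2) by field.
  assert (-2*rho <= t <= 2*rho) by (unfold Rabs in Ht; destruct Rcase_abs; lra).
  destruct (Rle_dec t (-3/2*rho)).
  { exists 0%nat. split; [lia|]. apply sqb. simpl. lra. }
  destruct (Rle_dec t (-1/2*rho)).
  { exists 1%nat. split; [lia|]. apply sqb. simpl. lra. }
  destruct (Rle_dec t (1/2*rho)).
  { exists 2%nat. split; [lia|]. apply sqb. simpl. lra. }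
  destruct (Rle_dec t (3/2*rho)).
  { exists 3%nat. split; [lia|]. apply sqb. simpl. lra. }
  exists 4%nat. split; [lia|]. apply sqb. simpl. lra.
Qed.

Lemma stab o rho p rp z : 0 < rho -> rho <= rp -> dist z p <= rp -> dist z o <= rho ->
  exists i j, (i < 5)%nat /\ (j < 5)%nat /\ dist (gpt o rho i j) p <= rp.
Proof.
  intros Hr Hrp Hzp Hzo.
  assert (Hc : exists c, dist c p <= rp - rho /\ dist c z <= rho).
  { exists (fst z + (rho/rp) * (fst p - fst z), snd z + (rho/rp) * (snd p - snd z)).
    assert (Ht : rho/rp * rp = rho) by (field; lra).
    assert (Ht0 : 0 < rho/rp) by (apply Rdiv_lt_0_compat; lra).
    assert (Ht1 : rho/rp <= 1) by nra.
    apply sq_le_of_dist in Hzp. unfold sq in Hzp.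
    split; apply dist_le_of_sq; try lra; unfold sq; cbn [fst snd].
    - replace ((fst z + rho / rp * (fst p - fst z) - fst p) ^ 2 +
               (snd z + rho / rp * (snd p - snd z) - snd p) ^ 2)
        with ((1 - rho/rp)^2 * ((fst z - fst p) ^ 2 + (snd z - snd p) ^ 2)) by ring.
      replace ((rp - rho)^2) with ((1 - rho/rp)^2 * rp^2) by (field; lra).
      apply Rmult_le_compat_l; [nra|auto].
    - replace ((fst z + rho / rp * (fst p - fst z) - fst z) ^ 2 +
               (snd z + rho / rp * (snd p - snd z) - snd z) ^ 2)
        with ((rho/rp)^2 * ((fst z - fst p) ^ 2 + (snd z - snd p) ^ 2)) by ring.
      replace (rho^2) with ((rho/rp)^2 * rp^2) by (field; lra).
      apply Rmult_le_compat_l; [nra|auto]. }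
  destruct Hc as [c [Hcp Hcz]].
  assert (Hco : dist c o <= 2*rho) by (pose proof (dist_tri c z o); lra).
  destruct (coord_le c o) as [Hx Hy].
  destruct (grid1 rho (fst c - fst o) Hr ltac:(lra)) as [i [Hi Hgi]].
  destruct (grid1 rho (snd c - snd o) Hr ltac:(lra)) as [j [Hj Hgj]].
  exists i, j. split; [auto|split; [auto|]].
  assert (Hg : dist (gpt o rho i j) c <= rho).
  { apply dist_le_of_sq; [lra|]. unfold sq, gpt; cbn [fst snd].
    replace ((fst o + gc i * rho - fst c) ^ 2 + (snd o + gc j * rho - snd c) ^ 2)
      with ((fst c - fst o - gc i * rho) ^ 2 + (snd c - snd o - gc j * rho) ^ 2) by ring.
    nra. }
  pose proof (dist_tri (gpt o rho i j) c p). lra.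
Qed.

Lemma min_exists (f : point -> R) (l : list point) (x : point) :
  exists m, In m (x :: l) /\ forall q, In q (x :: l) -> f m <= f q.
Proof.
  revert x. induction l as [|a l IH]; intros x.
  - exists x. split; [simpl; auto|]. intros q [<-|[]]. lra.
  - destruct (IH a) as [m [Hm Hmin]].
    destruct (Rle_dec (f x) (f m)).
    + exists x. split; [simpl; auto|]. intros q [<-|Hq]; [lra|]. specialize (Hmin q Hq). lra.
    + exists m. split; [simpl; auto|]. intros q [<-|Hq]; [lra|]. auto.
Qed.

Definition peq (a b : point) : {a = b} + {a <> b}.
Proof. decide equality; apply Req_EM_T. Defined.

Definition labels : list (nat * nat * nat) :=
  list_prod (list_prod (seq 0 5) (seq 0 5)) (seq 0 8).

Definition good (r : point -> R) (o : point) (rho : R) (L : nat * nat * nat) (p : point) : bool :=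
  let '(i, j, k) := L in
  let g := gpt o rho i j in
  (if Rle_dec (dist p g) (r p) then true else false) &&
  Nat.eqb (octant (fst p - fst g) (snd p - snd g)) k.

Definition path (r : point -> R) (o : point) (rho : R) (C : list point) (L : nat * nat * nat) :=
  let '(i, j, k) := L in
  isort (fun q => sq q (gpt o rho i j)) (filter (good r o rho L) C).

Lemma pair_ok r o rho i j k a b :
  good r o rho (i, j, k) a = true -> good r o rho (i, j, k) b = true ->
  sq b (gpt o rho i j) <= sq a (gpt o rho i j) -> dist a b <= r a.
Proof.
  unfold good. set (g := gpt o rho i j). intros Ha Hb Hs.
  apply andb_prop in Ha as [Ha1 Ha2]. apply andb_prop in Hb as [Hb1 Hb2].
  destruct Rle_dec as [Hda|]; [|discriminate].
  apply Nat.eqb_eq in Ha2, Hb2.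
  assert (Hk := oct_key (fst a - fst g) (snd a - snd g) (fst b - fst g) (snd b - snd g)
     ltac:(congruence) Hs).
  assert (sq a b <= sq a g) by (unfold sq; replace (fst a - fst b) with (fst a - fst g - (fst b - fst g)) by ring;
     replace (snd a - snd b) with (snd a - snd g - (snd b - snd g)) by ring; exact Hk).
  rewrite dist_sq. apply Rle_trans with (dist a g); auto.
  rewrite dist_sq. apply sqrt_le_1_alt; auto.
Qed.

Theorem lemma3 :
  exists c : nat,
    forall (P : list point) (r : point -> R),
      NoDup P ->
      (forall p, In p P -> 0 < r p) ->
      forall C : list point,
        is_clique P r C ->
        exists paths : list (list point),
          (length paths <= c)%nat /\
          (forall s, In s paths -> transitive_path P r s) /\
          (forall p, In p C <-> exists s, In s paths /\ In p s).
Proof.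
  exists 200%nat. intros P r HP Hr C [Hincl Hcl].
  destruct C as [|p0 C0] eqn:EC.
  { exists []. split; [simpl; lia|]. split; [intros s []|].
    intros p; split; [intros []|intros [s [[] _]]]. }
  rewrite <- EC in *.
  destruct (min_exists r C0 p0) as [m [Hm Hmin]]. rewrite <- EC in Hm, Hmin.
  set (rho := r m).
  assert (Hrho : 0 < rho) by (apply Hr, Hincl, Hm).
  set (C' := nodup peq C).
  exists (map (path r m rho C') labels).
  split; [rewrite length_map; reflexivity|].
  split.
  - intros s Hs. apply in_map_iff in Hs as [[[i j] k] [<- HL]].
    simpl. set (f := fun q => sq q (gpt m rho i j)).
    pose proof (isort_perm f (filter (good r m rho (i, j, k)) C')) as Hperm.
    assert (Hin : forall q, In q (isort f (filter (good r m rho (i, j, k)) C')) ->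
                       In q C /\ good r m rho (i, j, k) q = true).
    { intros q Hq. apply (Permutation_in _ (Permutation_sym Hperm)) in Hq.
      apply filter_In in Hq as [Hq1 Hq2]. split; auto. eapply nodup_In; eauto. }
    split; [|split].
    + eapply Permutation_NoDup; [exact Hperm|]. apply NoDup_filter, NoDup_nodup.
    + intros q Hq. apply Hincl, Hin, Hq.
    + eapply FOP_mono; [apply isort_sorted|].
      intros a b Ha Hb Hab. unfold tr_arc.
      apply (pair_ok r m rho i j k); [apply Hin, Ha | apply Hin, Hb | exact Hab].
  - intros p. split.
    + intros Hp.
      assert (Hrp : 0 < r p) by (apply Hr, Hincl, Hp).
      assert (Hz : exists z, dist z p <= r p /\ dist z m <= rho).
      { destruct (peq p m) as [<-|Hne].
        - exists p. rewrite dist_refl. unfold rho. lra.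
        - destruct (Hcl p m Hp Hm Hne) as [z [Hz1 Hz2]]. exists z. split; auto. }
      destruct Hz as [z [Hz1 Hz2]].
      destruct (stab m rho p (r p) z Hrho (Hmin p Hp) Hz1 Hz2) as [i [j [Hi [Hj Hg]]]].
      set (g := gpt m rho i j).
      set (k := octant (fst p - fst g) (snd p - snd g)).
      exists (path r m rho C' (i, j, k)). split.
      * apply in_map. unfold labels. apply in_prod; [apply in_prod|]; apply in_seq; try lia.
        pose proof (octant_lt (fst p - fst g) (snd p - snd g)). unfold k. lia.
      * simpl. eapply Permutation_in; [apply isort_perm|].
        apply filter_In. split; [apply nodup_In; auto|].
        unfold good. fold g. rewrite dist_sym in Hg.
        destruct Rle_dec; [|contradiction]. simpl. apply Nat.eqb_refl.
    + intros [s [Hs Hps]]. apply in_map_iff in Hs as [[[i j] k] [<- HL]].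
      simpl in Hps. apply (Permutation_in _ (Permutation_sym (isort_perm _ _))) in Hps.
      apply filter_In in Hps as [Hq _]. eapply nodup_In; eauto.
Qed.
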